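(* Let $a=e_1=(1,0,\dots,0)$, let $P$ be a distribution on $\mathbb{R}^k$ with finite second moments and covariance $\Sigma$ whose minimal eigenvalue is $\gamma_{\min}>0$, and let $\widehat\Sigma$ be any non-random symmetric positive-definite matrix with $\|\widehat\Sigma-\Sigma\|_F\le\gamma_{\min}/2$. Let $\hat\theta_{\mathrm{MultiPPI}(\widehat\Sigma)}$ be computed on samples from $P$ (independent of nothing but themselves, as described in the context). Then \[ \mathbb{E}\Big[\big(\hat\theta_{\mathrm{MultiPPI}(\widehat\Sigma)}-\theta^*\big)^2\Big]\le\mathcal V_B+\frac{4\sigma^2_{\mathrm{classical}}}{\gamma_{\min}}\,\|\widehat\Sigma-\Sigma\|_F , \] where $\|\cdot\|_F$ is the Frobenius norm.
   Context: $X\sim P$ in $\mathbb{R}^k$, $\theta^*=a^\top\mathbb{E}X=\mathbb{E}X_1$. $\mathcal I$ is a collection of nonempty subsets of $\{1,\dots,k\}$; $P_I:\mathbb{R}^k\to\mathbb{R}^{|I|}$ is the coordinate projection onto $I$; for a matrix $A$, $A_I=P_IAP_I^\top$. Costs $c_I\in\mathbb{R}^m_{\ge0}$, budget $B\in\mathbb{R}^m_{\ge0}$, vector inequalities componentwise; an allocation $\underline n\in\mathbb{Z}^{\mathcal I}_{\ge0}$ is feasible if $\sum_In_Ic_I\le B$. Weights $\lambda_I\in\mathbb{R}^{|I|}$ are unbiased if $\sum_{I:n_I>0}P_I^\top\lambda_I=a$. For SPD $A$, $\hat\theta_{\mathrm{MultiPPI}(A)}=\sum_{I:n_I>0}\frac1{n_I}\sum_{j=1}^{n_I}\lambda_I^\top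 X_I^{(I,j)}$, where $(\underline n,\underline\lambda)$ minimizes $\sum_{I:n_I>0}\frac1{n_I}\lambda_I^\top A_I\lambda_I$ over feasible unbiased pairs and $X^{(I,j)}$ are mutually independent copies of $X\sim P$ (only coordinates $I$ observed). $\mathcal V_B$ is the minimum of $\sum_{I:n_I>0}\frac1{n_I}\lambda_I^\top\Sigma_I\lambda_I$ over feasible unbiased pairs. $\sigma^2_{\mathrm{classical}}=\min\Sigma_{11}/n^0_{I^0}$, the minimum over $I^0\in\mathcal I$ with $1\in I^0$, where $n^0_{I^0}$ is the largest integer $n$ with $nc_{I^0}\le B$; assume at least one such $I^0$ has $n^0_{I^0}\ge1$. *)

(* Defs.v *)
From HB Require Import structures.
From mathcomp Require Import all_boot all_order all_algebra.
From mathcomp Require Import all_classical all_reals all_analysis.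
Set Implicit Arguments. Unset Strict Implicit. Unset Printing Implicit Defensive.
Import Order.TTheory GRing.Theory Num.Theory.
Local Open Scope classical_set_scope.
Local Open Scope ring_scope.

(* Index sets I are elements of {set 'I_k}; coordinate 1 of the paper is the
   ordinal with value 0.  A weight lambda_I in R^{|I|} is represented by its
   zero-padding P_I^T lambda_I : 'cV_k (supported in I). Then
   lambda_I^T A_I lambda_I = (P_I^T lambda_I)^T A (P_I^T lambda_I) and
   lambda_I^T X_I = (P_I^T lambda_I)^T X. *)

Section MultiPPI.
Variable R : realType.

Definition e1 (k : nat) : 'cV[R]_k := \col_(i < k) (i == 0 :> nat)%:R.

Definition quad (k : nat) (A : 'M[R]_k) (v : 'cV[R]_k) : R := (v^T *m A *m v) 0 0.

Definition frob (k : nat) (A : 'M[R]_k) : R :=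
  Num.sqrt (\sum_(i < k) \sum_(j < k) A i j ^+ 2).

Definition sym_posdef (k : nat) (A : 'M[R]_k) : Prop :=
  A^T = A /\ forall v : 'cV[R]_k, v != 0 -> 0 < quad A v.

Definition weights_supported (k : nat) (lam : {set 'I_k} -> 'cV[R]_k) : Prop :=
  forall (I : {set 'I_k}) (i : 'I_k), i \notin I -> lam I i 0 = 0.

Definition feasible (k m : nat) (coll : {set {set 'I_k}})
    (c : {set 'I_k} -> 'rV[R]_m) (B : 'rV[R]_m) (n : {set 'I_k} -> nat) : Prop :=
  (forall I, I \notin coll -> n I = 0%N) /\
  forall r : 'I_m, \sum_(I in coll) (n I)%:R * c I 0 r <= B 0 r.

Definition unbiased (k : nat) (coll : {set {set 'I_k}}) (n : {set 'I_k} -> nat)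
    (lam : {set 'I_k} -> 'cV[R]_k) : Prop :=
  \sum_(I in coll | (0 < n I)%N) lam I = e1 k.

Definition admissible (k m : nat) (coll : {set {set 'I_k}})
    (c : {set 'I_k} -> 'rV[R]_m) (B : 'rV[R]_m)
    (n : {set 'I_k} -> nat) (lam : {set 'I_k} -> 'cV[R]_k) : Prop :=
  feasible coll c B n /\ weights_supported lam /\ unbiased coll n lam.

Definition objective (k : nat) (coll : {set {set 'I_k}}) (A : 'M[R]_k)
    (n : {set 'I_k} -> nat) (lam : {set 'I_k} -> 'cV[R]_k) : R :=
  \sum_(I in coll | (0 < n I)%N) (n I)%:R^-1 * quad A (lam I).

Definition is_minimizer (k m : nat) (coll : {set {set 'I_k}})
    (c : {set 'I_k} -> 'rV[R]_m) (B : 'rV[R]_m) (A : 'M[R]_k)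
    (n : {set 'I_k} -> nat) (lam : {set 'I_k} -> 'cV[R]_k) : Prop :=
  admissible coll c B n lam /\
  forall n' lam', admissible coll c B n' lam' ->
    objective coll A n lam <= objective coll A n' lam'.

Definition V_B (k m : nat) (coll : {set {set 'I_k}})
    (c : {set 'I_k} -> 'rV[R]_m) (B : 'rV[R]_m) (Sigma : 'M[R]_k) : R :=
  inf [set v | exists n lam, admissible coll c B n lam /\ v = objective coll Sigma n lam].

Definition sigma2_classical (k m : nat) (coll : {set {set 'I_k}})
    (c : {set 'I_k} -> 'rV[R]_m) (B : 'rV[R]_m) (Sigma : 'M[R]_k) (i1 : 'I_k) : R :=
  inf [set v | exists I0 n0, [/\ I0 \in coll, i1 \in I0, (1 <= n0)%N,
        ((forall r, n0%:R * c I0 0 r <= B 0 r) /\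
         (forall n', (forall r, n'%:R * c I0 0 r <= B 0 r) -> (n' <= n0)%N))
      & v = Sigma i1 i1 / n0%:R]].

End MultiPPI.

Section Prob.
Context {d : measure_display} {T : measurableType d} {R : realType}.
Variable Pr : probability T R.

Definition mean_vec (k : nat) (X : 'I_k -> T -> R) : 'cV[R]_k :=
  \col_i fine ('E_Pr[X i]).
Definition cov_mx (k : nat) (X : 'I_k -> T -> R) : 'M[R]_k :=
  \matrix_(i, j) fine (covariance Pr (X i) (X j)).

Definition rect_event (k : nat) (X : 'I_k -> T -> R) (A : 'I_k -> set R) : set T :=
  [set w | forall i, A i (X i w)].

(* Y has the same joint law as X (equality on measurable rectangles, which
   determine the law on the Borel sigma-algebra of R^k) *)
Definition same_law (k : nat) (Y X : 'I_k -> T -> R) : Prop :=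
  forall A : 'I_k -> set R, (forall i, measurable (A i)) ->
    Pr (rect_event Y A) = Pr (rect_event X A).

Definition mutually_independent (J : eqType) (S : J -> Prop) (k : nat)
    (Xs : J -> 'I_k -> T -> R) : Prop :=
  forall (s : seq J) (A : J -> 'I_k -> set R),
    uniq s -> (forall f, f \in s -> S f) ->
    (forall f i, measurable (A f i)) ->
    fine (Pr [set w | forall f, f \in s -> rect_event (Xs f) (A f) w]) =
    \prod_(f <- s) fine (Pr (rect_event (Xs f) (A f))).

Definition multippi_est (k : nat) (coll : {set {set 'I_k}})
    (n : {set 'I_k} -> nat) (lam : {set 'I_k} -> 'cV[R]_k)
    (Xs : {set 'I_k} * nat -> 'I_k -> T -> R) (w : T) : R :=
  \sum_(I in coll | (0 < n I)%N) (n I)%:R^-1 *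
     \sum_(j < n I) \sum_(i < k) lam I i 0 * Xs (I, (j : nat)) i w.

End Prob.

(* Main.v *)
Require Import Defs.
From HB Require Import structures.
From mathcomp Require Import all_boot all_order all_algebra.
From mathcomp Require Import all_classical all_reals all_analysis.
From mathcomp Require Import measurable_realfun.
From mathcomp Require Import ring lra.
Import Order.TTheory GRing.Theory Num.Theory.
Set Implicit Arguments. Unset Strict Implicit. Unset Printing Implicit Defensive.
Local Open Scope classical_set_scope.
Local Open Scope ring_scope.

Section P1.
Context d (T : measurableType d) (R : realType) (Pr : probability T R).
Local Open Scope ereal_scope.

Lemma law1_ge0 (U U' : {RV Pr >-> R}) (h : R -> \bar R) :
  (forall A, measurable A -> Pr (U @^-1` A) = Pr (U' @^-1` A)) ->
  measurable_fun setT h -> (forall y, 0 <= h y) ->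
  \int[Pr]_x h (U x) = \int[Pr]_x h (U' x).
Proof.
move=> HA mh h0.
rewrite -(@ge0_integral_distribution _ _ _ _ _ _ U h) // -(@ge0_integral_distribution _ _ _ _ _ _ U' h) //.
by apply: eq_measure_integral => A mA _ /=; rewrite /distribution /pushforward HA.
Qed.

Lemma law1_E (U U' : {RV Pr >-> R}) :
  (forall A, measurable A -> Pr (U @^-1` A) = Pr (U' @^-1` A)) ->
  (U : T -> R) \in Lfun Pr 1 -> (U' : T -> R) \in Lfun Pr 1 ->
  'E_Pr[U] = 'E_Pr[U'].
Proof.
move=> HA /Lfun1_integrable i1 /Lfun1_integrable i2.
rewrite !unlock.
have mE : measurable_fun [set: R] (EFin \o (@id R)) by apply/measurable_EFinP.
rewrite -[LHS](@integral_distribution _ _ _ _ _ _ U EFin mE i1).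
rewrite -[RHS](@integral_distribution _ _ _ _ _ _ U' EFin mE i2).
by apply: eq_measure_integral => A mA _ /=; rewrite /distribution /pushforward HA.
Qed.

Lemma law1_L2 (U U' : {RV Pr >-> R}) :
  (forall A, measurable A -> Pr (U @^-1` A) = Pr (U' @^-1` A)) ->
  (U' : T -> R) \in Lfun Pr 2%:E -> (U : T -> R) \in Lfun Pr 2%:E.
Proof.
move=> HA; rewrite !inE => /andP[_]; rewrite !inE /= /finite_norm => H.
apply/andP; split; first by rewrite inE; exact: measurable_funP.
rewrite inE /= /finite_norm.
suff -> : ('N[Pr]_2%:E [EFin \o U] = 'N[Pr]_2%:E [EFin \o U']) by [].
rewrite unlock; congr (_ `^ _).
apply: (@law1_ge0 U U' (fun y => `|y%:E| `^ 2)) => //.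
  apply: (eq_measurable_fun (fun y : R => (`|y| `^ 2)%:E)) => [y _|].
    by rewrite poweR_EFin.
  apply/measurable_EFinP.
  apply: (measurableT_comp (measurable_powR _)).
  exact: normr_measurable.
by move=> y; exact: poweR_ge0.
Qed.

End P1.

Section pair.
Context d (T : measurableType d) (R : realType) (Pr : probability T R).
Local Open Scope ereal_scope.
Variables (U V : {RV Pr >-> R}).
Definition pairRV : T -> (R * R)%type := fun w => (U w, V w).
Lemma pairRV_mfun : measurable_fun setT pairRV.
Proof. by apply: measurable_fun_pair; exact: measurable_funP. Qed.
HB.instance Definition _ := isMeasurableFun.Build _ _ _ _ pairRV pairRV_mfun.
End pair.

Section P2.
Context d (T : measurableType d) (R : realType) (Pr : probability T R).
Local Open Scope ereal_scope.

Lemma law2 (U V U' V' : {RV Pr >-> R}) (h : (R * R)%type -> \bar R) :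
  (forall A B, measurable A -> measurable B ->
     Pr (U @^-1` A `&` V @^-1` B) = Pr (U' @^-1` A `&` V' @^-1` B)) ->
  measurable_fun setT h ->
  Pr.-integrable setT (h \o pairRV U V) -> Pr.-integrable setT (h \o pairRV U' V') ->
  \int[Pr]_x h (pairRV U V x) = \int[Pr]_x h (pairRV U' V' x).
Proof.
move=> HAB mh i1 i2.
rewrite -[LHS](@integral_distribution _ _ _ _ _ _ (pairRV U V) h mh i1).
rewrite -[RHS](@integral_distribution _ _ _ _ _ _ (pairRV U' V') h mh i2).
apply: eq_measure_integral => A mA _.
apply: (measure_unique [set A `*` B | A in measurable & B in measurable] (fun=> setT)) => //.
- exact: measurable_prod_measurableType.
- move=> _ _ [A1 mA1 [B1 mB1 <-]] [A2 mA2 [B2 mB2 <-]]; rewrite -setXI.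
  by exists (A1 `&` A2); [exact: measurableI|exists (B1 `&` B2) => //; exact: measurableI].
- by move=> _; exists setT => //; exists setT => //; exact: setXTT.
- by rewrite -subTset => x _; exists 0%N.
- move=> _ [A1 mA1 [B1 mB1 <-]]; rewrite /= /distribution /pushforward.
  have E W Z : pairRV W Z @^-1` (A1 `*` B1) = W @^-1` A1 `&` Z @^-1` B1.
    by apply/seteqP; split=> x.
  by rewrite !E HAB.
- by move=> _; rewrite (le_lt_trans (probability_le1 _ _)) ?ltry.
Qed.

End P2.

Section P3.
Context d (T : measurableType d) (R : realType) (Pr : probability T R).
Local Open Scope ereal_scope.

Lemma mul_meas : measurable_fun [set: (R * R)%type] (fun z : R * R => (z.1 * z.2)%:E).
Proof.
apply/(measurable_EFinP _ (fun z : R * R => z.1 * z.2)%R).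
by apply: measurable_funM; [exact: measurable_fst|exact: measurable_snd].
Qed.

Lemma indep_E (U V : {RV Pr >-> R}) :
  (forall A B, measurable A -> measurable B ->
     Pr (U @^-1` A `&` V @^-1` B) = Pr (U @^-1` A) * Pr (V @^-1` B)) ->
  (U : T -> R) \in Lfun Pr 1 -> (V : T -> R) \in Lfun Pr 1 ->
  ((U : T -> R) \* V)%R \in Lfun Pr 1 ->
  'E_Pr[(U : T -> R) \* V] = 'E_Pr[U] * 'E_Pr[V].
Proof.
move=> HAB /Lfun1_integrable iU /Lfun1_integrable iV /Lfun1_integrable iUV.
pose h := fun z : R * R => (z.1 * z.2)%:E.
have mh : measurable_fun setT h := mul_meas.
pose mu1 := distribution Pr U.
pose mu2 := distribution Pr V.
have prodE : forall X, measurable X ->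
    (mu1 \x mu2) X = distribution Pr (pairRV U V) X.
  move=> X mX; apply: product_measure_unique => //.
have ih : Pr.-integrable setT (h \o pairRV U V) by [].
have ihp : (mu1 \x mu2).-integrable setT h.
  apply/integrableP; split => //.
  rewrite (eq_measure_integral (distribution Pr (pairRV U V))); last first.
    by move=> A mA _; exact: prodE.
  rewrite ge0_integral_distribution //; last exact: measurableT_comp.
  by move/integrableP: ih => [].
rewrite unlock.
transitivity (\int[Pr]_x (h \o pairRV U V) x) => //.
rewrite -(integral_distribution mh ih).
rewrite (eq_measure_integral (mu1 \x mu2)); last first.
  by move=> A mA _; exact: (esym (prodE A mA)).
rewrite -integral12_prod_meas1 //.
have EV : \int[mu2]_y (y%:E) = \int[Pr]_x (V x)%:E.
  have mE : measurable_fun [set: R] (EFin \o (@id R)) by apply/measurable_EFinP.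
  exact: (@integral_distribution _ _ _ _ _ _ V EFin mE iV).
have EU : \int[mu1]_y (y%:E) = \int[Pr]_x (U x)%:E.
  have mE : measurable_fun [set: R] (EFin \o (@id R)) by apply/measurable_EFinP.
  exact: (@integral_distribution _ _ _ _ _ _ U EFin mE iU).
have iV2 : mu2.-integrable setT EFin.
  apply/integrableP; split; first by apply/(measurable_EFinP _ id).
  rewrite ge0_integral_distribution //; first by move/integrableP: iV => [].
  by apply: measurableT_comp => //; apply/(measurable_EFinP _ id).
have iU2 : mu1.-integrable setT EFin.
  apply/integrableP; split; first by apply/(measurable_EFinP _ id).
  rewrite ge0_integral_distribution //; first by move/integrableP: iU => [].
  by apply: measurableT_comp => //; apply/(measurable_EFinP _ id).
have fV : \int[Pr]_x (V x)%:E \is a fin_num by exact: integrable_fin_num.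
transitivity (\int[mu1]_x ((x%:E) * (fine (\int[Pr]_x (V x)%:E))%:E)).
  apply: eq_integral => x _; rewrite /fubini_F /h /=.
  under eq_integral do rewrite EFinM.
  by rewrite integralZl // EV fineK // muleC.
by rewrite integralZr // EU fineK.
Qed.

End P3.

Section P4.
Context d (T : measurableType d) (R : realType) (Pr : probability T R).

Definition cvr (U V : T -> R) : R := fine (covariance Pr U V).
Definition efr (U : T -> R) : R := fine ('E_Pr[U]).

Lemma L2_L1 (U : T -> R) : U \in Lfun Pr 2%:E -> U \in Lfun Pr 1.
Proof. by move=> H; apply: Lfun_subset12 => //; exact: fin_num_measure. Qed.

Lemma L2_scale (U : T -> R) c : U \in Lfun Pr 2%:E -> (fun w => c * U w) \in Lfun Pr 2%:E.
Proof.
move=> H; have -> : (fun w => c * U w) = c \o* U by apply/funext => w; rewrite /= mulrC.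
have h12 : (1 <= 2 :> R)%R by rewrite ler1n.
exact: (@Lfun_scale _ _ _ Pr U c 2%R h12 H).
Qed.

Lemma L2_sum (J : Type) (s : seq J) (P : pred J) (Y : J -> T -> R) :
  (forall a, P a -> Y a \in Lfun Pr 2%:E) ->
  (fun w => \sum_(a <- s | P a) Y a w) \in Lfun Pr 2%:E.
Proof.
move=> HY; elim: s => [|x s IH].
  have -> : (fun w => \sum_(a <- [::] | P a) Y a w) = cst 0.
    by apply/funext => w; rewrite big_nil.
  exact: Lfun_cst.
case Px : (P x).
  have -> : (fun w => \sum_(a <- x :: s | P a) Y a w) =
      (Y x \+ (fun w => \sum_(a <- s | P a) Y a w)).
    by apply/funext => w; rewrite big_cons Px.
  by apply: rpredD; [rewrite lee1n|move=> ?; exact: HY|move=> ?; exact: IH].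
have -> : (fun w => \sum_(a <- x :: s | P a) Y a w) =
    (fun w => \sum_(a <- s | P a) Y a w).
  by apply/funext => w; rewrite big_cons Px.
exact: IH.
Qed.

Lemma cvr_fin (U V : T -> R) : U \in Lfun Pr 2%:E -> V \in Lfun Pr 2%:E ->
  covariance Pr U V = (cvr U V)%:E.
Proof.
move=> HU HV; rewrite /cvr fineK //.
by apply: covariance_fin_num; [exact: L2_L1|exact: L2_L1|exact: Lfun2_mul_Lfun1].
Qed.

Lemma cvrC (U V : T -> R) : cvr U V = cvr V U.
Proof. by rewrite /cvr covarianceC. Qed.

Lemma cvr_scalel (U V : T -> R) c : U \in Lfun Pr 2%:E -> V \in Lfun Pr 2%:E ->
  cvr (fun w => c * U w) V = c * cvr U V.
Proof.
move=> HU HV.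
have -> : (fun w => c * U w) = (c \o* U) by apply/funext => w; rewrite /= mulrC.
have E := cvr_fin HU HV.
rewrite /cvr covarianceZl //; first by rewrite [covariance _ _ _]E.
- exact: L2_L1.
- exact: L2_L1.
- exact: Lfun2_mul_Lfun1.
Qed.

Lemma cvr_scaler (U V : T -> R) c : U \in Lfun Pr 2%:E -> V \in Lfun Pr 2%:E ->
  cvr U (fun w => c * V w) = c * cvr U V.
Proof. by move=> HU HV; rewrite cvrC cvr_scalel // cvrC. Qed.

Lemma cvr_suml (J : Type) (s : seq J) (P : pred J) (Y : J -> T -> R) (V : T -> R) :
  (forall a, P a -> Y a \in Lfun Pr 2%:E) -> V \in Lfun Pr 2%:E ->
  cvr (fun w => \sum_(a <- s | P a) Y a w) V = \sum_(a <- s | P a) cvr (Y a) V.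
Proof.
move=> HY HV; elim: s => [|x s IH].
  have -> : (fun w => \sum_(a <- [::] | P a) Y a w) = cst 0.
    by apply/funext => w; rewrite big_nil.
  by rewrite big_nil /cvr covariance_cst_l.
case Px : (P x).
  have -> : (fun w => \sum_(a <- x :: s | P a) Y a w) =
      (Y x \+ (fun w => \sum_(a <- s | P a) Y a w)).
    by apply/funext => w; rewrite big_cons Px.
  rewrite big_cons Px -IH /cvr covarianceDl //; last exact: L2_sum.
  rewrite fineD //.
    by rewrite (cvr_fin (HY x Px) HV).
  by rewrite (cvr_fin _ HV) //; exact: L2_sum.
  exact: HY.
have -> : (fun w => \sum_(a <- x :: s | P a) Y a w) =
    (fun w => \sum_(a <- s | P a) Y a w).
  by apply/funext => w; rewrite big_cons Px.
by rewrite big_cons Px.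
Qed.

Lemma cvr_sumr (J : Type) (s : seq J) (P : pred J) (Y : J -> T -> R) (V : T -> R) :
  (forall a, P a -> Y a \in Lfun Pr 2%:E) -> V \in Lfun Pr 2%:E ->
  cvr V (fun w => \sum_(a <- s | P a) Y a w) = \sum_(a <- s | P a) cvr V (Y a).
Proof.
by move=> HY HV; rewrite cvrC cvr_suml //; apply: eq_bigr => a _; rewrite cvrC.
Qed.

Lemma efr_scale (U : T -> R) c : U \in Lfun Pr 1 ->
  efr (fun w => c * U w) = c * efr U.
Proof.
move=> HU; have -> : (fun w => c * U w) = (c \o* U) by apply/funext => w; rewrite /= mulrC.
by rewrite /efr expectationZl // fineM //; exact: expectation_fin_num.
Qed.

Lemma L1_scale (U : T -> R) c : U \in Lfun Pr 1 -> (fun w => c * U w) \in Lfun Pr 1.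
Proof. by move=> H; rewrite (_ : (fun w => c * U w) = c \o* U); [exact: (@Lfun_scale _ _ _ Pr U c 1%R)|apply/funext => w; rewrite /= mulrC]. Qed.

Lemma L1_sum (J : Type) (s : seq J) (P : pred J) (Y : J -> T -> R) :
  (forall a, P a -> Y a \in Lfun Pr 1) ->
  (fun w => \sum_(a <- s | P a) Y a w) \in Lfun Pr 1.
Proof.
move=> HY; elim: s => [|x s IH].
  have -> : (fun w => \sum_(a <- [::] | P a) Y a w) = cst 0.
    by apply/funext => w; rewrite big_nil.
  exact: (Lfun_cst _ _ 1%R).
case Px : (P x).
  have -> : (fun w => \sum_(a <- x :: s | P a) Y a w) =
      (Y x \+ (fun w => \sum_(a <- s | P a) Y a w)).
    by apply/funext => w; rewrite big_cons Px.
  by apply: rpredD; [exact: HY|exact: IH].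
have -> : (fun w => \sum_(a <- x :: s | P a) Y a w) =
    (fun w => \sum_(a <- s | P a) Y a w).
  by apply/funext => w; rewrite big_cons Px.
exact: IH.
Qed.

Lemma efr_sum (J : Type) (s : seq J) (P : pred J) (Y : J -> T -> R) :
  (forall a, P a -> Y a \in Lfun Pr 1) ->
  efr (fun w => \sum_(a <- s | P a) Y a w) = \sum_(a <- s | P a) efr (Y a).
Proof.
move=> HY; elim: s => [|x s IH].
  have -> : (fun w => \sum_(a <- [::] | P a) Y a w) = cst 0.
    by apply/funext => w; rewrite big_nil.
  by rewrite big_nil /efr expectation_cst.
case Px : (P x).
  have -> : (fun w => \sum_(a <- x :: s | P a) Y a w) =
      (Y x \+ (fun w => \sum_(a <- s | P a) Y a w)).
    by apply/funext => w; rewrite big_cons Px.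
  rewrite big_cons Px -IH /efr expectationD //; last exact: L1_sum.
  rewrite fineD //; first exact/expectation_fin_num/HY.
  exact/expectation_fin_num/L1_sum.
  exact: HY.
have -> : (fun w => \sum_(a <- x :: s | P a) Y a w) =
    (fun w => \sum_(a <- s | P a) Y a w).
  by apply/funext => w; rewrite big_cons Px.
by rewrite big_cons Px.
Qed.

End P4.

Section P5.
Context d (T : measurableType d) (R : realType) (Pr : probability T R).
Variables (k : nat) (X : 'I_k -> {RV Pr >-> R}) (J : eqType)
  (Xs : J -> 'I_k -> {RV Pr >-> R}) (S : J -> Prop).
Hypothesis HX2 : forall i, (X i : T -> R) \in Lfun Pr 2%:E.
Hypothesis Hlaw : forall f, same_law Pr (fun i => Xs f i) (fun i => X i).
Hypothesis Hind : mutually_independent Pr S (fun f i => Xs f i).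

Let fam (i j : 'I_k) (A B : set R) : 'I_k -> set R :=
  fun l => (if l == i then A else setT) `&` (if l == j then B else setT).

Let fam_meas i j A B : measurable A -> measurable B -> forall l, measurable (fam i j A B l).
Proof.
move=> mA mB l; rewrite /fam; apply: measurableI.
  by case: ifP.
by case: ifP.
Qed.

Let rect_fam (Y : 'I_k -> T -> R) i j A B :
  rect_event Y (fam i j A B) = Y i @^-1` A `&` Y j @^-1` B.
Proof.
apply/seteqP; split => w /=.
  move=> H; split.
    by have := H i; rewrite /fam eqxx => -[].
  by have := H j; rewrite /fam eqxx => -[].
move=> [HA HB] l; rewrite /fam; split.
  by case: eqP => // ->.
by case: eqP => // ->.
Qed.

Lemma lawX2 f i j A B : measurable A -> measurable B ->
  Pr (Xs f i @^-1` A `&` Xs f j @^-1` B) = Pr (X i @^-1` A `&` X j @^-1` B).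
Proof.
move=> mA mB.
have := Hlaw f (fam_meas i j mA mB).
by rewrite !rect_fam.
Qed.

Lemma lawX1 f i A : measurable A ->
  Pr (Xs f i @^-1` A) = Pr (X i @^-1` A).
Proof.
move=> mA; have := lawX2 f i i mA mA.
by rewrite !setIid.
Qed.

Lemma indepX f g i j A B : S f -> S g -> f != g -> measurable A -> measurable B ->
  Pr (Xs f i @^-1` A `&` Xs g j @^-1` B) = (Pr (Xs f i @^-1` A) * Pr (Xs g j @^-1` B))%E.
Proof.
move=> Sf Sg fg mA mB.
pose F : J -> 'I_k -> set R := fun h =>
  if h == f then fam i i A A else if h == g then fam j j B B else fun=> setT.
have mF : forall h l, measurable (F h l).
  move=> h l; rewrite /F; case: ifP => _; first exact: fam_meas.
  by case: ifP => _ //; exact: fam_meas.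
have uf : uniq [:: f; g] by rewrite /= inE andbT.
have Ss : forall h, h \in [:: f; g] -> S h.
  by move=> h; rewrite !inE => /orP[] /eqP ->.
have := Hind uf Ss mF.
rewrite big_cons big_cons big_nil mulr1.
have Ff : F f = fam i i A A by rewrite /F eqxx.
have Fg : F g = fam j j B B by rewrite /F eq_sym (negbTE fg) eqxx.
rewrite Ff Fg !rect_fam !setIid.
have -> : [set w | forall h, h \in [:: f; g] -> rect_event (fun i0 => Xs h i0) (F h) w] =
    Xs f i @^-1` A `&` Xs g j @^-1` B.
  rewrite -[X in _ = X `&` _](setIid (Xs f i @^-1` A)) -[X in _ = _ `&` X](setIid (Xs g j @^-1` B)).
  rewrite -!(rect_fam (fun i0 => Xs _ i0)).
  apply/seteqP; split => w /=.
    by move=> H; split; [rewrite -Ff; apply: H; rewrite mem_head|rewrite -Fg; apply: H; rewrite !inE eqxx orbT].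
  by move=> [H1 H2] h; rewrite !inE => /orP[] /eqP ->; [rewrite Ff|rewrite Fg].
move=> H.
have mE1 : measurable (Xs f i @^-1` A) by exact: measurable_funPTI.
have mE2 : measurable (Xs g j @^-1` B) by exact: measurable_funPTI.
rewrite -[LHS]fineK; last by apply: fin_num_measure; exact: measurableI.
rewrite H EFinM !fineK //; exact: fin_num_measure.
Qed.

Lemma XsL2 f i : (Xs f i : T -> R) \in Lfun Pr 2%:E.
Proof. apply: (law1_L2 (U' := X i)); last exact: HX2. by move=> A mA; exact: lawX1. Qed.

Lemma EXs f i : efr Pr (Xs f i) = efr Pr (X i).
Proof.
rewrite /efr (law1_E (U' := X i)) //.
- by move=> A mA; exact: lawX1.
- exact/L2_L1/XsL2.
- exact/L2_L1/HX2.
Qed.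

Lemma cvXs_same f i j : cvr Pr (Xs f i) (Xs f j) = cvr Pr (X i) (X j).
Proof.
rewrite /cvr (@covarianceE _ _ _ Pr (Xs f i) (Xs f j) (L2_L1 (XsL2 f i)) (L2_L1 (XsL2 f j))
   (Lfun2_mul_Lfun1 (XsL2 f i) (XsL2 f j))).
rewrite (@covarianceE _ _ _ Pr (X i) (X j) (L2_L1 (HX2 i)) (L2_L1 (HX2 j))
   (Lfun2_mul_Lfun1 (HX2 i) (HX2 j))).
have E1 : ('E_Pr[Xs f i] = 'E_Pr[X i])%E.
  rewrite (law1_E (U' := X i)) //; [by move=> A mA; exact: lawX1|exact/L2_L1/XsL2|exact/L2_L1/HX2].
have E2 : ('E_Pr[Xs f j] = 'E_Pr[X j])%E.
  rewrite (law1_E (U' := X j)) //; [by move=> A mA; exact: lawX1|exact/L2_L1/XsL2|exact/L2_L1/HX2].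
rewrite E1 E2; congr (fine (_ - _)).
rewrite !unlock.
apply: (@law2 _ _ _ Pr (Xs f i) (Xs f j) (X i) (X j) (fun z => (z.1 * z.2)%:E)).
- by move=> A B mA mB; exact: lawX2.
- exact: mul_meas.
- apply/Lfun1_integrable; exact: Lfun2_mul_Lfun1 (XsL2 f i) (XsL2 f j).
- apply/Lfun1_integrable; exact: Lfun2_mul_Lfun1 (HX2 i) (HX2 j).
Qed.

Lemma cvXs_indep f g i j : S f -> S g -> f != g -> cvr Pr (Xs f i) (Xs g j) = 0.
Proof.
move=> Sf Sg fg.
rewrite /cvr (@covarianceE _ _ _ Pr (Xs f i) (Xs g j) (L2_L1 (XsL2 f i)) (L2_L1 (XsL2 g j))
   (Lfun2_mul_Lfun1 (XsL2 f i) (XsL2 g j))).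
rewrite (indep_E (U := Xs f i) (V := Xs g j)).
- rewrite subee //; apply: fin_numM; exact/expectation_fin_num/L2_L1/XsL2.
- by move=> A B mA mB; exact: indepX.
- exact/L2_L1/XsL2.
- exact/L2_L1/XsL2.
- exact: Lfun2_mul_Lfun1 (XsL2 f i) (XsL2 g j).
Qed.

End P5.

Local Close Scope classical_set_scope.

Section LA.
Variable R : realType.

Lemma quad_disc (a b c : R) : (forall t, 0 <= a * t ^+ 2 + b * t + c) -> b ^+ 2 <= 4 * a * c.
Proof.
move=> H.
pose p := Poly [:: c; b; a].
have := @deg_le2_poly_ge0 _ p.
rewrite size_Poly => /(_ isT).
have -> : p`_1 = b by rewrite /p !coefE.
have -> : p`_2 = a by rewrite /p !coefE.
have -> : p`_0 = c by rewrite /p !coefE.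
rewrite subr_le0; apply => t.
rewrite horner_Poly /= mul0r add0r.
have := H t; congr (_ <= _); ring.
Qed.

Lemma CS (I : finType) (a b : I -> R) :
  (\sum_i a i * b i) ^+ 2 <= (\sum_i a i ^+ 2) * (\sum_i b i ^+ 2).
Proof.
have H := @quad_disc (\sum_i a i ^+ 2) (2 * \sum_i a i * b i) (\sum_i b i ^+ 2).
have : (2 * \sum_i a i * b i) ^+ 2 <= 4 * (\sum_i a i ^+ 2) * (\sum_i b i ^+ 2).
  apply: H => t.
  have -> : (\sum_i a i ^+ 2) * t ^+ 2 + 2 * (\sum_i a i * b i) * t + \sum_i b i ^+ 2
      = \sum_i (t * a i + b i) ^+ 2.
    rewrite [RHS](eq_bigr (fun i => t ^+ 2 * a i ^+ 2 + 2 * t * (a i * b i) + b i ^+ 2)); last by move=> i _; ring.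
    rewrite !big_split /= -!mulr_sumr; ring.
  by apply: sumr_ge0 => i _; exact: sqr_ge0.
move=> H2; rewrite -(@ler_pM2l _ 4) ?ltr0n //.
by move: H2; congr (_ <= _); ring.
Qed.


Variable k : nat.
Implicit Types (A : 'M[R]_k) (u v w : 'cV[R]_k).

Definition nrm2 v : R := \sum_i v i 0 ^+ 2.
Definition bil A u w : R := (u^T *m A *m w) 0 0.

Lemma bilE A u w : bil A u w = \sum_i \sum_j u i 0 * A i j * w j 0.
Proof.
rewrite /bil mxE exchange_big /=; apply: eq_bigr => j _.
rewrite mxE mulr_suml; apply: eq_bigr => i _.
by rewrite mxE.
Qed.

Lemma quadE A v : quad A v = \sum_i \sum_j v i 0 * A i j * v j 0.
Proof. exact: bilE. Qed.

Lemma nrm2_ge0 v : 0 <= nrm2 v.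
Proof. by apply: sumr_ge0 => i _; exact: sqr_ge0. Qed.

Lemma frob_ge0 A : 0 <= frob A.
Proof. exact: sqrtr_ge0. Qed.

Lemma frob2 A : frob A ^+ 2 = \sum_i \sum_j A i j ^+ 2.
Proof.
rewrite sqr_sqrtr //; apply: sumr_ge0 => i _; apply: sumr_ge0 => j _; exact: sqr_ge0.
Qed.

Lemma bil_sq A u w : bil A u w ^+ 2 <= frob A ^+ 2 * (nrm2 u * nrm2 w).
Proof.
rewrite bilE frob2 /nrm2.
have E1 : \sum_i \sum_j u i 0 * A i j * w j 0 =
    \sum_(p : 'I_k * 'I_k) A p.1 p.2 * (u p.1 0 * w p.2 0).
  rewrite -[RHS](pair_bigA _ (fun i j => A i j * (u i 0 * w j 0))) /=.
  by apply: eq_bigr => i _; apply: eq_bigr => j _; ring.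
have E2 : \sum_i \sum_j A i j ^+ 2 = \sum_(p : 'I_k * 'I_k) A p.1 p.2 ^+ 2.
  by rewrite -[RHS](pair_bigA _ (fun i j => A i j ^+ 2)).
have E3 : (\sum_i u i 0 ^+ 2) * (\sum_i w i 0 ^+ 2) =
    \sum_(p : 'I_k * 'I_k) (u p.1 0 * w p.2 0) ^+ 2.
  rewrite -[RHS](pair_bigA _ (fun i j => (u i 0 * w j 0) ^+ 2)) /=.
  rewrite mulr_suml; apply: eq_bigr => i _.
  rewrite mulr_sumr; apply: eq_bigr => j _; ring.
rewrite E1 E2 E3; exact: CS.
Qed.

Lemma sq_le_norm (x y : R) : 0 <= y -> x ^+ 2 <= y ^+ 2 -> `|x| <= y.
Proof.
move=> y0 H; rewrite -(@ler_pXn2r _ 2) ?nnegrE ?normr_ge0 //.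
by rewrite real_normK // num_real.
Qed.

Lemma bil_abs A u w : `|bil A u w| <= frob A * Num.sqrt (nrm2 u) * Num.sqrt (nrm2 w).
Proof.
apply: sq_le_norm.
  by rewrite mulr_ge0 ?mulr_ge0 ?frob_ge0 ?sqrtr_ge0.
rewrite !exprMn (sqr_sqrtr (nrm2_ge0 u)) (sqr_sqrtr (nrm2_ge0 w)) -mulrA; exact: bil_sq.
Qed.

Lemma quad_abs A v : `|quad A v| <= frob A * nrm2 v.
Proof.
have := bil_abs A v v; rewrite -mulrA -expr2 sqr_sqrtr ?nrm2_ge0 //.
Qed.

Lemma mulmx_col A v i : (A *m v) i 0 = \sum_j A i j * v j 0.
Proof. by rewrite mxE. Qed.

Lemma nrm2_mul A v : nrm2 (A *m v) <= frob A ^+ 2 * nrm2 v.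
Proof.
rewrite /nrm2 frob2 mulr_suml; apply: ler_sum => i _.
rewrite mulmx_col; exact: CS.
Qed.

Lemma bil_Mv A v : bil A (A *m v) v = nrm2 (A *m v).
Proof.
rewrite bilE /nrm2; apply: eq_bigr => i _.
rewrite expr2 [X in _ = _ * X]mulmx_col mulr_sumr; apply: eq_bigr => j _; ring.
Qed.

Lemma bil_sym A u w : A^T = A -> bil A u w = bil A w u.
Proof.
move=> HA; rewrite !bilE exchange_big /=; apply: eq_bigr => i _; apply: eq_bigr => j _.
have -> : A j i = A^T i j by rewrite mxE.
rewrite HA; ring.
Qed.

Lemma quad_add A (t : R) u w :
  quad A (t *: u + w) = t ^+ 2 * quad A u + t * bil A u w + t * bil A w u + quad A w.
Proof.
rewrite !quadE !bilE !mulr_sumr -!big_split /=; apply: eq_bigr => i _.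
rewrite !mulr_sumr -!big_split /=; apply: eq_bigr => j _.
rewrite !mxE; ring.
Qed.

Lemma psd_CS A u w : A^T = A -> (forall v, 0 <= quad A v) ->
  bil A u w ^+ 2 <= quad A u * quad A w.
Proof.
move=> HA Hpsd.
have := @quad_disc (quad A u) (2 * bil A u w) (quad A w).
have H : forall t, 0 <= quad A u * t ^+ 2 + 2 * bil A u w * t + quad A w.
  move=> t; have := Hpsd (t *: u + w); rewrite quad_add (bil_sym u w HA).
  by congr (_ <= _); ring.
move=> /(_ H) H2; rewrite -(@ler_pM2l _ 4) ?ltr0n //.
by move: H2; congr (_ <= _); ring.
Qed.

Lemma quad_scale A (c : R) v : quad A (c *: v) = c ^+ 2 * quad A v.
Proof.
rewrite !quadE mulr_sumr; apply: eq_bigr => i _.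
rewrite mulr_sumr; apply: eq_bigr => j _; rewrite !mxE; ring.
Qed.

Lemma nrm2_scale (c : R) v : nrm2 (c *: v) = c ^+ 2 * nrm2 v.
Proof.
rewrite /nrm2 mulr_sumr; apply: eq_bigr => i _; rewrite !mxE; ring.
Qed.

Lemma quadB A B v : quad (A - B) v = quad A v - quad B v.
Proof.
rewrite !quadE -sumrB; apply: eq_bigr => i _.
rewrite -sumrB; apply: eq_bigr => j _; rewrite !mxE; ring.
Qed.

Lemma quad_scalar (c : R) v : quad (c%:M) v = c * nrm2 v.
Proof.
rewrite quadE /nrm2 mulr_sumr; apply: eq_bigr => i _.
rewrite (bigD1 i) //= big1 => [|j /negbTE ji]; last by rewrite !mxE eq_sym ji mulr0n mulr0 mul0r.
by rewrite !mxE eqxx mulr1n addr0; ring.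
Qed.


Lemma eig_lb (S : 'M[R]_k) (g : R) : S^T = S ->
  (forall x, eigenvalue S x -> g <= x) -> forall v, g * nrm2 v <= quad S v.
Proof.
move=> Hsym Hmin.
case: (posnP k) => [k0|kpos].
  move=> v.
  have e1 : nrm2 v = 0.
    by rewrite /nrm2 big1 // => -[i hi]; exfalso; move: hi; rewrite k0.
  have e2 : quad S v = 0.
    by rewrite quadE big1 // => -[i hi]; exfalso; move: hi; rewrite k0.
  by rewrite e1 e2 mulr0.
pose i0 := Ordinal kpos.
pose E : set R := [set x : R | exists2 u, nrm2 u = 1 & x = quad S u]%classic.
have E0 : (E !=set0)%classic.
  pose u0 : 'cV[R]_k := \col_i (i == i0)%:R.
  exists (quad S u0); exists u0 => //.
  rewrite /nrm2 (bigD1 i0) //= big1 => [|j /negbTE ji]; last by rewrite mxE ji expr0n.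
  by rewrite mxE eqxx expr1n addr0.
have Elb : has_lbound E.
  exists (- frob S) => x [u nu ->].
  have := quad_abs S u; rewrite nu mulr1 ler_norml => /andP[] //.
set mu := inf E.
have Hmu : forall v, mu * nrm2 v <= quad S v.
  move=> v; have := nrm2_ge0 v; rewrite le_eqVlt => /orP[/eqP n0|npos].
    rewrite -n0 mulr0; have := quad_abs S v; rewrite -n0 mulr0 normr_le0 => /eqP->.
    by [].
  set s := Num.sqrt (nrm2 v).
  have s0 : 0 < s by rewrite sqrtr_gt0.
  have nu : nrm2 (s^-1 *: v) = 1.
    by rewrite nrm2_scale exprVn sqr_sqrtr ?nrm2_ge0 // mulVf // gt_eqF.
  have := ge_inf Elb (ex_intro2 _ _ (s^-1 *: v) nu erefl).
  rewrite quad_scale exprVn sqr_sqrtr ?nrm2_ge0 // mulrC -/(_ / _).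
  by rewrite ler_pdivlMr.
pose M := S - mu%:M.
have Msym : M^T = M by rewrite /M linearB /= Hsym tr_scalar_mx.
have Mpsd : forall v, 0 <= quad M v.
  by move=> v; rewrite quadB quad_scalar subr_ge0 Hmu.
have key : forall v, nrm2 (M *m v) <= frob M * quad M v.
  move=> v; have h := psd_CS (M *m v) v Msym Mpsd; rewrite bil_Mv in h.
  have h2 : quad M (M *m v) <= frob M * nrm2 (M *m v).
    exact: le_trans (ler_norm _) (quad_abs _ _).
  have h3 : nrm2 (M *m v) ^+ 2 <= nrm2 (M *m v) * (frob M * quad M v).
    apply: le_trans h _; rewrite mulrA [_ * frob M]mulrC.
    by apply: ler_wpM2r => //.
  have := nrm2_ge0 (M *m v); rewrite le_eqVlt => /orP[/eqP n0|npos].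
    by rewrite -n0 mulr_ge0 ?frob_ge0.
  by rewrite -(@ler_pM2l _ (nrm2 (M *m v))) // -expr2.
have detM : \det M == 0.
  apply/negPn/negP => dM.
  have uM : M \in unitmx by rewrite unitmxE unitfE.
  pose N := invmx M.
  have bound : forall v, nrm2 v <= frob N ^+ 2 * (frob M * quad M v).
    move=> v; rewrite -{1}(mulKmx uM v).
    apply: le_trans (nrm2_mul N (M *m v)) _.
    by apply: ler_wpM2l; [exact: sqr_ge0|exact: key].
  set C := frob N ^+ 2 * frob M.
  have C0 : 0 <= C by rewrite mulr_ge0 ?sqr_ge0 ?frob_ge0.
  have eps0 : 0 < (C + 1)^-1 by rewrite invr_gt0 ltr_wpDl.
  have [x [u nu ->] hx] := inf_adherent eps0 (conj E0 Elb).
  rewrite -/mu in hx.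
  have q1 : quad M u < (C + 1)^-1.
    by rewrite quadB quad_scalar nu mulr1 ltrBlDl.
  have := bound u; rewrite nu mulrA -/C => h1.
  have h2 : C * quad M u <= C * (C + 1)^-1 by apply: ler_wpM2l => //; exact: ltW.
  have h3 : C * (C + 1)^-1 < 1 by rewrite -/(_ / _) ltr_pdivrMr ?mul1r ?ltrDl // ltr_wpDl.
  by have := le_lt_trans (le_trans h1 h2) h3; rewrite ltxx.
have [r r0 rM] := det0P detM.
have : eigenvalue S mu.
  apply/eigenvalueP; exists r => //.
  by apply/eqP; rewrite -subr_eq0 -mul_mx_scalar -mulmxBr rM.
move/Hmin => gmu v.
exact: le_trans (ler_wpM2r (nrm2_ge0 v) gmu) (Hmu v).
Qed.

End LA.

Section Opt.
Variable R : realType.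
Variables (k m : nat) (i1 : 'I_k) (Hi1 : nat_of_ord i1 = 0%N).
Variables (coll : {set {set 'I_k}}) (c : {set 'I_k} -> 'rV[R]_m) (B : 'rV[R]_m).

Lemma e1E (i : 'I_k) : (e1 R k) i 0 = (i == i1)%:R.
Proof.
rewrite mxE; congr ((nat_of_bool _)%:R); apply/idP/idP => /eqP h; apply/eqP.
  by apply: val_inj; rewrite /= h Hi1.
by rewrite h Hi1.
Qed.

Lemma sum_delta (F : 'I_k -> R) : (forall i, i != i1 -> F i = 0) -> \sum_i F i = F i1.
Proof. move=> H; rewrite (bigD1 i1) //= big1 ?addr0 // => i; exact: H. Qed.

Lemma quad_e1 (A : 'M[R]_k) : quad A (e1 R k) = A i1 i1.
Proof.
rewrite quadE sum_delta => [|i ne]; last by apply: big1 => j _; rewrite !e1E (negbTE ne) !mul0r.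
rewrite sum_delta => [|j ne]; last by rewrite !e1E (negbTE ne) mulr0.
by rewrite !e1E eqxx mul1r mulr1.
Qed.

Lemma nrm2_e1 : nrm2 (e1 R k) = 1.
Proof.
rewrite /nrm2 sum_delta => [|i ne]; last by rewrite !e1E (negbTE ne) expr0n.
by rewrite e1E eqxx expr1n.
Qed.

Definition ncl (I0 : {set 'I_k}) (n0 : nat) : {set 'I_k} -> nat :=
  fun I => if I == I0 then n0 else 0%N.
Definition lcl (I0 : {set 'I_k}) : {set 'I_k} -> 'cV[R]_k :=
  fun I => if I == I0 then e1 R k else 0.

Lemma cl_adm I0 n0 : I0 \in coll -> i1 \in I0 -> (1 <= n0)%N ->
  (forall r, n0%:R * c I0 0 r <= B 0 r) ->
  admissible coll c B (ncl I0 n0) (lcl I0).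
Proof.
move=> I0c i1I0 n01 Hn0; split; [split|split].
- by move=> I Ic; rewrite /ncl; case: eqP => // e; move: Ic; rewrite e I0c.
- move=> r; rewrite (bigD1 I0) //= big1 => [|I /andP[_ /negbTE ne]]; last first.
    by rewrite /ncl ne mul0r.
  by rewrite /ncl eqxx addr0.
- move=> I i iI; rewrite /lcl; case: eqP => [e|_]; last by rewrite mxE.
  rewrite e1E; case: eqP => // e'; move: iI; by rewrite e e' i1I0.
- rewrite /unbiased (bigD1 I0) /=; last by rewrite I0c /ncl eqxx.
  rewrite big1 => [|I /andP[/andP[_ h] ne]]; last by move: h; rewrite /ncl (negbTE ne).
  by rewrite /lcl eqxx addr0.
Qed.

Lemma cl_obj (A : 'M[R]_k) I0 n0 : I0 \in coll -> (1 <= n0)%N ->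
  objective coll A (ncl I0 n0) (lcl I0) = A i1 i1 / n0%:R.
Proof.
move=> I0c n01; rewrite /objective (bigD1 I0) /=; last by rewrite I0c /ncl eqxx.
rewrite big1 => [|I /andP[/andP[_ h] ne]]; last by move: h; rewrite /ncl (negbTE ne).
by rewrite /ncl /lcl eqxx addr0 quad_e1 mulrC.
Qed.

Definition Wt (n : {set 'I_k} -> nat) (lam : {set 'I_k} -> 'cV[R]_k) : R :=
  \sum_(I in coll | (0 < n I)%N) (n I)%:R^-1 * nrm2 (lam I).

Lemma Wt_ge0 n lam : 0 <= Wt n lam.
Proof. by apply: sumr_ge0 => I _; rewrite mulr_ge0 ?invr_ge0 ?ler0n ?nrm2_ge0. Qed.

Lemma obj_le_W (A : 'M[R]_k) (a : R) n lam :
  (forall v, a * nrm2 v <= quad A v) -> a * Wt n lam <= objective coll A n lam.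
Proof.
move=> H; rewrite /Wt /objective mulr_sumr; apply: ler_sum => I _.
by rewrite mulrCA; apply: ler_wpM2l; rewrite ?invr_ge0 ?ler0n.
Qed.

Lemma obj_pert (A A' : 'M[R]_k) n lam :
  objective coll A n lam <= objective coll A' n lam + frob (A - A') * Wt n lam.
Proof.
rewrite /Wt /objective mulr_sumr -big_split /=; apply: ler_sum => I _.
rewrite mulrCA -mulrDr; apply: ler_wpM2l; rewrite ?invr_ge0 ?ler0n //.
have := quad_abs (A - A') (lam I); rewrite quadB ler_norml => /andP[_ h].
by rewrite -lerBlDl.
Qed.


Lemma frob_subC (A A' : 'M[R]_k) : frob (A - A') = frob (A' - A).
Proof.
rewrite /frob; congr (Num.sqrt _); apply: eq_bigr => i _; apply: eq_bigr => j _.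
by rewrite !mxE; ring.
Qed.

Lemma quad0v (A : 'M[R]_k) : quad A 0 = 0.
Proof. by rewrite -(scale0r (0 : 'cV[R]_k)) quad_scale expr0n mul0r. Qed.

Lemma posdef_ge0 (A : 'M[R]_k) v : sym_posdef A -> 0 <= quad A v.
Proof.
move=> [_ H]; case: (eqVneq v 0) => [->|nz]; first by rewrite quad0v.
exact/ltW/H.
Qed.

Lemma obj_pos (A : 'M[R]_k) n lam : sym_posdef A -> unbiased coll n lam ->
  0 < objective coll A n lam.
Proof.
move=> HA Hu.
case: (pselect (exists I, [&& I \in coll, (0 < n I)%N & lam I != 0])) => [[I /and3P[Ic nI lI]]|H].
  rewrite /objective (bigD1 I) /=; last by rewrite Ic nI.
  rewrite -[0]addr0; apply: ltr_leD.
    by rewrite mulr_gt0 ?invr_gt0 ?ltr0n //; case: HA => _; apply.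
  rewrite addr0; apply: sumr_ge0 => J _; rewrite mulr_ge0 ?invr_ge0 ?ler0n //; exact: posdef_ge0.
exfalso.
have Hz : \sum_(I in coll | (0 < n I)%N) lam I = 0.
  apply: big1 => I /andP[Ic nI]; case: (eqVneq (lam I) 0) => // nz.
  by exfalso; apply: H; exists I; rewrite Ic nI nz.
move: Hu; rewrite /unbiased Hz.
move/(congr1 (fun M : 'cV[R]_k => M i1 0)); rewrite mxE e1E eqxx => /eqP.
by rewrite eq_sym oner_eq0.
Qed.

Lemma det_main (Sig Sh : 'M[R]_k) (gam : R) n lam :
  (forall I r, I \in coll -> 0 <= c I 0 r) -> (forall r, 0 <= B 0 r) ->
  (exists2 I0, I0 \in coll & i1 \in I0 /\ forall r, c I0 0 r <= B 0 r) ->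
  0 < gam -> (forall v, gam * nrm2 v <= quad Sig v) ->
  sym_posdef Sh -> frob (Sh - Sig) <= gam / 2 ->
  is_minimizer coll c B Sh n lam ->
  objective coll Sig n lam <= V_B coll c B Sig +
    4 * sigma2_classical coll c B Sig i1 / gam * frob (Sh - Sig).
Proof.
move=> Hc HB Hcl g0 Hq Hpd Hd [Hadm Hopt].
set d := frob (Sh - Sig).
have Hd' : d <= gam / 2 by [].
clear Hd.
have d0 : 0 <= d by exact: frob_ge0.
have dsym : frob (Sig - Sh) = d by rewrite frob_subC.
have Sh_lb : forall v, (gam - d) * nrm2 v <= quad Sh v.
  move=> v; have := quad_abs (Sh - Sig) v; rewrite quadB ler_norml => /andP[h _].
  rewrite -/d in h; have := Hq v; rewrite mulrBl; lra.
have WSig : forall n' l', gam * Wt n' l' <= objective coll Sig n' l'.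
  by move=> n' l'; exact: obj_le_W.
have WSh : forall n' l', (gam - d) * Wt n' l' <= objective coll Sh n' l'.
  by move=> n' l'; exact: obj_le_W.
have pert1 : forall n' l', objective coll Sig n' l' <= objective coll Sh n' l' + d * Wt n' l'.
  by move=> n' l'; rewrite -dsym; exact: obj_pert.
have pert2 : forall n' l', objective coll Sh n' l' <= objective coll Sig n' l' + d * Wt n' l'.
  by move=> n' l'; exact: obj_pert.
set h := objective coll Sh n lam.
set D := d / gam.
have D0 : 0 <= D by rewrite divr_ge0 // ltW.
have D12 : D <= 1 / 2 by rewrite ler_pdivrMr // mul1r mulrC.
have dD : d = D * gam by rewrite /D divfK // gt_eqF.
have Snon : exists I0 n0, [/\ I0 \in coll, i1 \in I0, (1 <= n0)%N,
    (forall r, n0%:R * c I0 0 r <= B 0 r) & (forall n', (forall r, n'%:R * c I0 0 r <= B 0 r) -> (n' <= n0)%N)].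
  case: Hcl => I0 I0c [i1I0 cB].
  case: (pselect (exists r, 0 < c I0 0 r)) => [[r0 cr0]|nc].
    pose P := fun n' : nat => [forall r, n'%:R * c I0 0 r <= B 0 r].
    have exP : exists i, P i by exists 1%N; apply/forallP => r; rewrite mul1r.
    have ubP : forall i, P i -> (i <= Num.truncn (B 0 r0 / c I0 0 r0)%R)%N.
      move=> i /forallP /(_ r0) hi.
      rewrite truncn_ge_nat; last by rewrite divr_ge0 ?HB ?ltW.
      by rewrite ler_pdivlMr.
    case: (ex_maxnP exP ubP) => n0 Pn0 maxn0.
    exists I0, n0; split => //.
    - by apply: maxn0; apply/forallP => r; rewrite mul1r.
    - by move=> r; move/forallP: Pn0; apply.
    - by move=> n' hn'; apply: maxn0; apply/forallP.
  exfalso.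
  have c0 : forall r, c I0 0 r = 0.
    move=> r; apply/eqP; rewrite eq_le Hc // andbT leNgt; apply/negP => h0; apply: nc; by exists r.
  have hpos : 0 < h by apply: obj_pos Hpd _; case: Hadm => _ [].
  set N := (Num.truncn (Sh i1 i1 / h)).+1.
  have cN : forall r, N%:R * c I0 0 r <= B 0 r by move=> r; rewrite c0 mulr0.
  have := Hopt _ _ (cl_adm I0c i1I0 (ltn0Sn _) cN).
  rewrite cl_obj // -/h => hh.
  have hN : Sh i1 i1 / h < N%:R := truncnS_gt _.
  rewrite ler_pdivlMr ?ltr0n // in hh.
  rewrite ltr_pdivrMr // mulrC in hN.
  by have := lt_le_trans hN hh; rewrite ltxx.
have bound_v : forall I0 n0, I0 \in coll -> i1 \in I0 -> (1 <= n0)%N ->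
    (forall r, n0%:R * c I0 0 r <= B 0 r) ->
    objective coll Sig n lam <= V_B coll c B Sig + 4 * D * (Sig i1 i1 / n0%:R).
  move=> I0 n0 I0c i1I0 n01 Hn0.
  set v := Sig i1 i1 / n0%:R.
  set a : R := n0%:R.
  have a1 : 1 <= a by rewrite /a ler1n.
  have a0 : 0 < a by apply: lt_le_trans a1.
  have ha : h <= Sh i1 i1 / a.
    by have := Hopt _ _ (cl_adm I0c i1I0 n01 Hn0); rewrite cl_obj.
  have hb : Sh i1 i1 <= Sig i1 i1 + d.
    have := quad_abs (Sh - Sig) (e1 R k).
    rewrite quadB !quad_e1 nrm2_e1 mulr1 -/d ler_norml => /andP[_ h'].
    lra.
  have hc : gam <= Sig i1 i1.
    by have := Hq (e1 R k); rewrite nrm2_e1 quad_e1 mulr1.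
  have v0 : 0 <= v by rewrite /v divr_ge0 ?ltW // (lt_le_trans g0 hc).
  have f1 : h <= v + D * v.
    have e : D * v = (d / a) * (Sig i1 i1 / gam) by rewrite /D /v /a; ring.
    have e2 : d / a <= D * v.
      rewrite e; apply: ler_peMr; first by rewrite divr_ge0 // ltW.
      by rewrite ler_pdivlMr // mul1r.
    have e3 : Sh i1 i1 / a <= v + d / a.
      by rewrite /v -mulrDl; apply: ler_wpM2r; [rewrite invr_ge0 ltW|].
    lra.
  have g2 : h <= 3 / 2 * v.
    have : D * v <= 1 / 2 * v by apply: ler_wpM2r.
    lra.
  have f4 : objective coll Sig n lam <= h + 2 * D * h.
    have W0 := Wt_ge0 n lam.
    have h1 := pert1 n lam.
    have h2 := WSh n lam.
    have h3 : gam / 2 * Wt n lam <= (gam - d) * Wt n lam.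
      apply: ler_wpM2r => //; lra.
    have h4 : d * Wt n lam = 2 * D * (gam / 2 * Wt n lam).
      by rewrite dD; field.
    have h5 : 2 * D * (gam / 2 * Wt n lam) <= 2 * D * h.
      apply: ler_wpM2l; first lra.
      exact: le_trans h3 h2.
    rewrite -/h in h1 h2; lra.
  have lbV : forall x, [set x | exists n' lam', admissible coll c B n' lam' /\
      x = objective coll Sig n' lam']%classic x ->
      objective coll Sig n lam - 4 * D * v <= x.
    move=> x [n' [l' [adm' ->]]].
    set x' := objective coll Sig n' l'.
    have f2 : h <= x' + D * x'.
      have h1 := Hopt _ _ adm'.
      have h2 := pert2 n' l'.
      have h3 := WSig n' l'.
      have h4 : d * Wt n' l' <= D * x'.
        by rewrite dD -mulrA; apply: ler_wpM2l.
      rewrite -/h -/x' in h1 h2 h3 *; lra.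
    have g1 : h <= x' + D * v.
      case: (leP x' v) => hx.
        have : D * x' <= D * v by apply: ler_wpM2l.
        lra.
      lra.
    have p1 : D * h <= D * (3 / 2 * v) by apply: ler_wpM2l.
    lra.
  have Vnon : ([set x | exists n' lam', admissible coll c B n' lam' /\
      x = objective coll Sig n' lam']%classic !=set0)%classic.
    exists (objective coll Sig (ncl I0 n0) (lcl I0)); exists (ncl I0 n0), (lcl I0).
    by split => //; exact: cl_adm.
  have := lb_le_inf Vnon lbV.
  rewrite /V_B; lra.
set Sset := [set v | exists I0 n0, [/\ I0 \in coll, i1 \in I0, (1 <= n0)%N,
        ((forall r, n0%:R * c I0 0 r <= B 0 r) /\
         (forall n', (forall r, n'%:R * c I0 0 r <= B 0 r) -> (n' <= n0)%N))
      & v = Sig i1 i1 / n0%:R]]%classic.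
have allS : forall v, Sset v -> objective coll Sig n lam <= V_B coll c B Sig + 4 * D * v.
  by move=> v [I0 [n0 [I0c i1I0 n01 [Hn0 _] ->]]]; exact: (bound_v I0 n0 I0c i1I0 n01 Hn0).
have Snon' : (Sset !=set0)%classic.
  case: Snon => I0 [n0 [I0c i1I0 n01 Hn0 Hmax]].
  by exists (Sig i1 i1 / n0%:R); exists I0, n0; split.
have -> : 4 * sigma2_classical coll c B Sig i1 / gam * d = 4 * D * sigma2_classical coll c B Sig i1.
  by rewrite /D; ring.
have [v Sv] := Snon'.
case: (eqVneq D 0) => [D00|Dn0].
  have := allS v Sv; rewrite D00; lra.
have Dpos : 0 < 4 * D by rewrite mulr_gt0 // lt_neqAle eq_sym Dn0 D0.
have lb : lbound Sset ((objective coll Sig n lam - V_B coll c B Sig) / (4 * D)).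
  move=> w Sw; rewrite ler_pdivrMr // mulrC.
  have := allS w Sw; lra.
have := lb_le_inf Snon' lb.
rewrite ler_pdivrMr // -/(sigma2_classical coll c B Sig i1).
lra.
Qed.

End Opt.

Section Main.
Context d (T : measurableType d) (R : realType) (Pr : probability T R).
Variables (k : nat) (coll : {set {set 'I_k}}) (n : {set 'I_k} -> nat)
  (lam : {set 'I_k} -> 'cV[R]_k) (X : 'I_k -> {RV Pr >-> R})
  (Xs : {set 'I_k} * nat -> 'I_k -> {RV Pr >-> R}).
Hypothesis HX2 : forall i, (X i : T -> R) \in Lfun Pr 2%:E.
Hypothesis Hlaw : forall f, same_law Pr (fun i => Xs f i) (fun i => X i).
Hypothesis Hind : mutually_independent Pr
              (fun f : {set 'I_k} * nat => f.1 \in coll /\ (f.2 < n f.1)%N)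
              (fun f i => Xs f i).

Let S := fun f : {set 'I_k} * nat => f.1 \in coll /\ (f.2 < n f.1)%N.
Let rng := fun I : {set 'I_k} => (I \in coll) && (0 < n I)%N.
Let Y (I : {set 'I_k}) (j : nat) : T -> R := fun w => \sum_(i < k) lam I i 0 * Xs (I, j) i w.
Let Z (I : {set 'I_k}) : T -> R := fun w => \sum_(j < n I) Y I j w.
Let a (I : {set 'I_k}) : R := (n I)%:R^-1.
Let Sigma := cov_mx Pr (fun i => X i).

Let XsL2' f i : (Xs f i : T -> R) \in Lfun Pr 2%:E := XsL2 HX2 Hlaw f i.

Let YL2 I j : Y I j \in Lfun Pr 2%:E.
Proof.
apply: (@L2_sum _ _ _ Pr _ _ xpredT (fun i w => lam I i 0 * Xs (I, j) i w)) => i _.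
exact: L2_scale.
Qed.

Let ZL2 I : Z I \in Lfun Pr 2%:E.
Proof. by apply: (@L2_sum _ _ _ Pr _ _ xpredT (fun j : 'I_(n I) => Y I j)) => j _; exact: YL2. Qed.

Let estE w : multippi_est coll n lam (fun f i => Xs f i) w =
  \sum_(I in coll | (0 < n I)%N) a I * Z I w.
Proof. by []. Qed.

Lemma est_L2 : multippi_est coll n lam (fun f i => Xs f i) \in Lfun Pr 2%:E.
Proof.
have -> : multippi_est coll n lam (fun f i => Xs f i) =
   (fun w => \sum_(I <- index_enum _ | rng I) a I * Z I w) by [].
apply: L2_sum => I _; exact: L2_scale.
Qed.

Lemma cvY I I' (j j' : nat) : I \in coll -> I' \in coll -> (j < n I)%N -> (j' < n I')%N ->
  cvr Pr (Y I j) (Y I' j') = if (I == I') && (j == j') then quad Sigma (lam I) else 0.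
Proof.
move=> Ic I'c jn j'n.
rewrite /Y (@cvr_suml _ _ _ Pr _ _ xpredT (fun i w => lam I i 0 * Xs (I, (j : nat)) i w)); last first.
  - by apply: (@L2_sum _ _ _ Pr _ _ xpredT (fun i w => lam I' i 0 * Xs (I', j') i w)) => i _; exact: L2_scale.
  - by move=> i _; exact: L2_scale.
under eq_bigr => i _.
  rewrite cvr_scalel //; last first.
    by apply: (@L2_sum _ _ _ Pr _ _ xpredT (fun i w => lam I' i 0 * Xs (I', j') i w)) => i' _; exact: L2_scale.
  rewrite (@cvr_sumr _ _ _ Pr _ _ xpredT (fun i w => lam I' i 0 * Xs (I', j') i w)) //; last first.
    by move=> i' _; exact: L2_scale.
  under eq_bigr => i' _ do rewrite cvr_scaler //.
  over.
case: ifP => [/andP[/eqP eI /eqP ej]|ne].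
  subst I' j'.
  rewrite quadE; apply: eq_bigr => i _; rewrite mulr_sumr; apply: eq_bigr => i' _.
  rewrite (cvXs_same HX2 Hlaw) /Sigma /cov_mx mxE /cvr; ring.
apply: big1 => i _; rewrite big1 ?mulr0 // => i' _.
rewrite (cvXs_indep HX2 Hlaw Hind) ?mulr0 //.
apply/negP => /eqP [e1 e2]; move: ne; by rewrite e1 e2 !eqxx.
Qed.


Lemma cvZ I I' : rng I -> rng I' ->
  cvr Pr (Z I) (Z I') = if I == I' then (n I)%:R * quad Sigma (lam I) else 0.
Proof.
move=> /andP[Ic nI] /andP[I'c nI'].
rewrite /Z (@cvr_suml _ _ _ Pr _ _ xpredT (fun j : 'I_(n I) => Y I j) (Z I') (fun j _ => YL2 I j) (ZL2 I')).
under eq_bigr => j _.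
  rewrite (@cvr_sumr _ _ _ Pr _ _ xpredT (fun j' : 'I_(n I') => Y I' j') (Y I j) (fun j' _ => YL2 I' j') (YL2 I j)).
  under eq_bigr => j' _ do rewrite cvY //.
  over.
case: (eqVneq I I') => [eI|ne]; last first.
  by apply: big1 => j _; apply: big1.
subst I'.
rewrite (eq_bigr (fun=> quad Sigma (lam I))); last first.
  move=> j _; rewrite (bigD1 j) //= !eqxx big1 ?addr0 // => j' ne.
  have : (j : nat) != j' by apply: contra ne => /eqP h; apply/eqP/val_inj.
  by rewrite eq_sym => /negbTE ->.
by rewrite big_const_ord iter_addr_0 mulr_natl.
Qed.

Lemma cvr_est : cvr Pr (multippi_est coll n lam (fun f i => Xs f i))
    (multippi_est coll n lam (fun f i => Xs f i)) = objective coll Sigma n lam.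
Proof.
have -> : multippi_est coll n lam (fun f i => Xs f i) =
   (fun w => \sum_(I <- index_enum _ | rng I) a I * Z I w) by [].
rewrite (@cvr_suml _ _ _ Pr _ _ rng (fun I w => a I * Z I w)); first last.
- by apply: (@L2_sum _ _ _ Pr _ _ rng (fun I w => a I * Z I w)) => I _; exact: L2_scale.
- by move=> I _; exact: L2_scale.
rewrite /objective; apply: eq_bigr => I rI.
rewrite cvr_scalel //; last first.
  by apply: (@L2_sum _ _ _ Pr _ _ rng (fun I w => a I * Z I w)) => I' _; exact: L2_scale.
rewrite (@cvr_sumr _ _ _ Pr _ _ rng (fun I w => a I * Z I w)) //; last first.
  by move=> I' _; exact: L2_scale.
rewrite (bigD1 I) //= cvr_scaler // cvZ // eqxx big1 ?addr0; last first.
  move=> I' /andP[rI' ne]; rewrite cvr_scaler // cvZ //.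
  by rewrite eq_sym (negbTE ne) mulr0.
have n0 : (n I)%:R != 0 :> R by case/andP: rI => _ h; rewrite pnatr_eq0 -lt0n.
by rewrite /a; field.
Qed.


Hypothesis Hu : unbiased coll n lam.

Let efr_Z I : rng I -> efr Pr (Z I) = (n I)%:R * \sum_(i < k) lam I i 0 * efr Pr (X i).
Proof.
move=> rI.
rewrite /Z (@efr_sum _ _ _ Pr _ _ xpredT (fun j : 'I_(n I) => Y I j)); last first.
  by move=> j _; exact/L2_L1/YL2.
rewrite (eq_bigr (fun=> \sum_(i < k) lam I i 0 * efr Pr (X i))); last first.
  move=> j _; rewrite /Y (@efr_sum _ _ _ Pr _ _ xpredT (fun i w => lam I i 0 * Xs (I, (j : nat)) i w)); last first.
    by move=> i _; exact/L2_L1/L2_scale.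
  apply: eq_bigr => i _; rewrite efr_scale; last exact/L2_L1.
  by rewrite (EXs HX2 Hlaw).
by rewrite big_const_ord iter_addr_0 mulr_natl.
Qed.

Lemma efr_est : efr Pr (multippi_est coll n lam (fun f i => Xs f i)) =
  ((e1 R k)^T *m mean_vec Pr (fun i => X i)) 0 0.
Proof.
have -> : multippi_est coll n lam (fun f i => Xs f i) =
   (fun w => \sum_(I <- index_enum _ | rng I) a I * Z I w) by [].
rewrite (@efr_sum _ _ _ Pr _ _ rng (fun I w => a I * Z I w)); last first.
  by move=> I _; exact/L2_L1/L2_scale.
rewrite (eq_bigr (fun I => \sum_(i < k) lam I i 0 * efr Pr (X i))); last first.
  move=> I rI; rewrite efr_scale; last exact/L2_L1.
  rewrite efr_Z // /a mulrA mulVf ?mul1r //.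
  by case/andP: rI => _ h; rewrite pnatr_eq0 -lt0n.
rewrite exchange_big /= mxE; apply: eq_bigr => i _.
rewrite -mulr_suml !mxE /efr; congr (_ * _).
have := congr1 (fun M : 'cV[R]_k => M i 0) Hu.
by rewrite /= summxE => ->; rewrite mxE.
Qed.

Lemma main_E :
  ('E_Pr[fun w => ((multippi_est coll n lam (fun f i => Xs f i) w -
       ((e1 R k)^T *m mean_vec Pr (fun i => X i)) 0 0) ^+ 2)%R] =
   (objective coll Sigma n lam)%:E)%E.
Proof.
set est := multippi_est coll n lam (fun f i => Xs f i).
set th := ((e1 R k)^T *m mean_vec Pr (fun i => X i)) 0 0.
have hL2 : est \in Lfun Pr 2%:E := est_L2.
have hL1 := L2_L1 hL2.
have Eest : ('E_Pr[est] = th%:E)%E.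
  by rewrite /th -efr_est /efr fineK //; exact: expectation_fin_num.
pose D := (est \- cst th)%R.
have DL2 : D \in Lfun Pr 2%:E.
  by apply: rpredB; [rewrite lee1n|move=> ?; exact: hL2|move=> ?; exact: Lfun_cst].
have ED : ('E_Pr[D] = 0)%E.
  by rewrite expectationB ?Lfun_cst // Eest expectation_cst subee.
have V1 := varianceE DL2.
have V2 : variance Pr D = (objective coll Sigma n lam)%:E.
  by rewrite /D (varianceB_cst_r _ hL2) /variance (cvr_fin hL2 hL2) cvr_est.
rewrite V2 ED exprfctE in V1.
rewrite V1 expe2 mule0 sube0.
by [].
Qed.

End Main.

Local Open Scope classical_set_scope.
Unset Implicit Arguments.

Theorem theorem3 (R : realType) (d : measure_display) (T : measurableType d)
    (Pr : probability T R)
    (k m : nat) (i1 : 'I_k) (Hi1 : nat_of_ord i1 = 0%N)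
    (coll : {set {set 'I_k}}) (Hcoll : forall I, I \in coll -> I != finset.set0)
    (c : {set 'I_k} -> 'rV[R]_m) (Hc : forall I r, I \in coll -> 0 <= c I 0 r)
    (B : 'rV[R]_m) (HB : forall r, 0 <= B 0 r)
    (Hcl : exists2 I0, I0 \in coll & i1 \in I0 /\ forall r, c I0 0 r <= B 0 r)
    (X : 'I_k -> {RV Pr >-> R}) (HX2 : forall i, (X i : T -> R) \in Lfun Pr 2%:E)
    (gamma_min : R)
    (Hgev : eigenvalue (cov_mx Pr (fun i => X i)) gamma_min)
    (Hgmin : forall g, eigenvalue (cov_mx Pr (fun i => X i)) g -> gamma_min <= g)
    (Hgpos : 0 < gamma_min)
    (Sigma_hat : 'M[R]_k) (HSh : sym_posdef Sigma_hat)
    (Hclose : frob (Sigma_hat - cov_mx Pr (fun i => X i)) <= gamma_min / 2)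
    (n : {set 'I_k} -> nat) (lam : {set 'I_k} -> 'cV[R]_k)
    (Hmin : is_minimizer coll c B Sigma_hat n lam)
    (Xs : {set 'I_k} * nat -> 'I_k -> {RV Pr >-> R})
    (Hlaw : forall f, same_law Pr (fun i => Xs f i) (fun i => X i))
    (Hind : mutually_independent Pr
              (fun f : {set 'I_k} * nat => f.1 \in coll /\ (f.2 < n f.1)%N)
              (fun f i => Xs f i)) :
  let Sigma := cov_mx Pr (fun i => X i) in
  let theta_star := (e1 R k)^T *m mean_vec Pr (fun i => X i) in
  ('E_Pr[fun w => ((multippi_est coll n lam (fun f i => Xs f i) w - theta_star 0 0) ^+ 2)%R]
     <= (V_B coll c B Sigma
         + 4 * sigma2_classical coll c B Sigma i1 / gamma_min
           * frob (Sigma_hat - Sigma))%:E)%E.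
Proof.
cbv zeta.
have Hu : unbiased coll n lam by case: Hmin => [[_ [_ Hu]] _].
rewrite (main_E HX2 Hlaw Hind Hu) lee_fin.
set Sigma := cov_mx Pr (fun i => X i).
have Hsym : Sigma^T = Sigma.
  by apply/matrixP => i j; rewrite !mxE covarianceC.
have Hq := eig_lb Hsym Hgmin.
exact: (det_main Hi1 Hc HB Hcl Hgpos Hq HSh Hclose Hmin).
Qed.
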